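(* Let $R$ be a hyperring such that $X=\operatorname{Spec}R$ is irreducible, and let $S$, $K$, $\mathcal{F}_X$ be as in the context. Then for every $f\in S$ there is a canonical injective strict homomorphism of hyperrings $R_f\to\mathcal{F}_X(D(f))$, $\frac{a}{f^n}\mapsto\frac{a}{f^n}$; in particular (taking $f=1$) $R$ is a sub-hyperring of $\mathcal{F}_X(X)$ via $a\mapsto\frac a1$. Furthermore, if $R$ has a unique maximal hyperideal, then $R\cong\mathcal{F}_X(X)$.
   Context: Hyperring: a set with a hyperoperation $+:R\times R\to\mathcal{P}^*(R)$ (nonempty subsets; extended to subsets by $A+B=\bigcup a+b$) making $(R,+,0)$ a canonical hypergroup (commutative, associative, unique $0$ with $0+x=\{x\}$, unique $-x$ with $0\in x+(-x)$, and $x\in y+z\iff z\in x+(-y)$), and a commutative monoid $(R,\cdot,1)$, with $x(y+z)=xy+xz$, $0x=0$, $0\neq1$. Homomorphisms satisfy $\varphi(a+b)\subseteq\varphi(a)+\varphi(b)$, $\varphi(ab)=\varphi(a)\varphi(b)$; strict means equality for sums. Hyperideals: nonempty $I$ with $a-rb\subseteq I$ for $a,b\in I$, $r\in R$; prime/maximal as usual; $\operatorname{Spec}R$ has the Zariski topology, $D(f)=\{\mathfrak{p}\mid f\notin\mathfrak{p}\}$. $S$ is the set of non-zero-divisors of $R$; for a multiplicative submonoid $T$, $T^{-1}R$ is $R\times T$ modulo $(r_1,t_1)\sim(r_2,t_2)\iff xr_1t_2=xr_2t_1$ for some $x\in T$, with $\frac{r_1}{t_1}+\frac{r_2}{t_2}=\{\frac{y}{t_1t_2}\mid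 y\in r_1t_2+t_1r_2\}$ and componentwise multiplication; $K=S^{-1}R$, $R_f=\{1,f,f^2,\dots\}^{-1}R$. For open $U\subseteq X$, $\mathcal{F}_X(U)=\{u\in K\mid\forall\mathfrak{p}\in U,\ u=\frac ab\text{ with }a\in R,\ b\in S\setminus\mathfrak{p}\}$, a sub-hyperring of $K$. *)

(* Defs.v *)
From Stdlib Require Import Classical ClassicalEpsilon FunctionalExtensionality PropExtensionality.

Set Implicit Arguments.
Unset Strict Implicit.

(* A hyperring.  [hadd x y z] means  z ∈ x + y. *)
Record HyperRing := {
  hr :> Type;
  hadd : hr -> hr -> hr -> Prop;
  hzero : hr;
  hone : hr;
  hmul : hr -> hr -> hr;
  hneg : hr -> hr;
  hadd_nonempty : forall x y, exists z, hadd x y z;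
  hadd_comm : forall x y z, hadd x y z <-> hadd y x z;
  hadd_assoc : forall x y z w,
      (exists u, hadd x y u /\ hadd u z w) <-> (exists v, hadd y z v /\ hadd x v w);
  hadd_0l : forall x z, hadd hzero x z <-> z = x;
  hadd_neg : forall x, hadd x (hneg x) hzero;
  hneg_unique : forall x y, hadd x y hzero -> y = hneg x;
  hadd_rev : forall x y z, hadd y z x <-> hadd x (hneg y) z;
  hmul_assoc : forall x y z, hmul x (hmul y z) = hmul (hmul x y) z;
  hmul_comm : forall x y, hmul x y = hmul y x;
  hmul_1l : forall x, hmul hone x = x;
  hmul_distr : forall x y z w,
      (exists u, hadd y z u /\ w = hmul x u) <-> hadd (hmul x y) (hmul x z) w;
  hmul_0l : forall x, hmul hzero x = hzero;
  hzero_neq_one : hzero <> hone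
}.

Arguments hadd {h} _ _ _.
Arguments hzero {h}.
Arguments hone {h}.
Arguments hmul {h} _ _.
Arguments hneg {h} _.

Fixpoint hpow (R : HyperRing) (x : R) (n : nat) : R :=
  match n with O => hone | S m => hmul x (hpow x m) end.

Definition hyperideal (R : HyperRing) (I : R -> Prop) : Prop :=
  (exists a, I a) /\
  forall a b r z, I a -> I b -> hadd a (hneg (hmul r b)) z -> I z.

Definition prime_hyperideal (R : HyperRing) (P : R -> Prop) : Prop :=
  hyperideal P /\ (exists x, ~ P x) /\
  forall a b, P (hmul a b) -> P a \/ P b.

Definition maximal_hyperideal (R : HyperRing) (M : R -> Prop) : Prop :=
  hyperideal M /\ (exists x, ~ M x) /\
  forall J : R -> Prop, hyperideal J -> (forall x, M x -> J x) ->
     (forall x, J x <-> M x) \/ (forall x, J x).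

Definition unique_maximal (R : HyperRing) : Prop :=
  exists M : R -> Prop, maximal_hyperideal M /\
    forall M' : R -> Prop, maximal_hyperideal M' -> forall x, M' x <-> M x.

Definition Spec (R : HyperRing) := { P : R -> Prop | prime_hyperideal P }.

(* open sets: complements of V(E) = { p | E ⊆ p } *)
Definition zariski_open (R : HyperRing) (U : Spec R -> Prop) : Prop :=
  exists E : R -> Prop, forall p : Spec R, U p <-> exists e, E e /\ ~ proj1_sig p e.

Definition Dopen (R : HyperRing) (f : R) : Spec R -> Prop :=
  fun p => ~ proj1_sig p f.

Definition Spec_irreducible (R : HyperRing) : Prop :=
  (exists p : Spec R, True) /\
  forall U V : Spec R -> Prop, zariski_open U -> zariski_open V ->
    (exists p, U p) -> (exists p, V p) -> exists p, U p /\ V p.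

Record MulSub (R : HyperRing) := {
  msub : R -> Prop;
  msub1 : msub hone;
  msubM : forall x y, msub x -> msub y -> msub (hmul x y)
}.

Definition nzd (R : HyperRing) (x : R) : Prop :=
  forall y, hmul x y = hzero -> y = hzero.

Lemma nzd1 (R : HyperRing) : nzd (@hone R).
Proof. intros y H. now rewrite hmul_1l in H. Qed.

Lemma nzdM (R : HyperRing) (x y : R) : nzd x -> nzd y -> nzd (hmul x y).
Proof. intros Hx Hy z H. apply Hy, Hx. now rewrite hmul_assoc. Qed.

Definition Ssub (R : HyperRing) : MulSub R := Build_MulSub (@nzd1 R) (@nzdM R).

Definition powers (R : HyperRing) (f : R) : R -> Prop :=
  fun t => exists n, t = hpow f n.

Lemma hpow_add (R : HyperRing) (f : R) m n :
  hmul (hpow f m) (hpow f n) = hpow f (m + n).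
Proof.
  induction m as [|m IH]; simpl; [apply hmul_1l|].
  now rewrite <- hmul_assoc, IH.
Qed.

Lemma powers1 (R : HyperRing) (f : R) : powers f hone.
Proof. now exists 0. Qed.

Lemma powersM (R : HyperRing) (f : R) x y :
  powers f x -> powers f y -> powers f (hmul x y).
Proof. intros [m ->] [n ->]. exists (m + n). apply hpow_add. Qed.

Definition Powsub (R : HyperRing) (f : R) : MulSub R :=
  Build_MulSub (powers1 f) (@powersM R f).

(* class of the fraction p.1/p.2 : the set of pairs q equivalent to p *)
Definition cls (R : HyperRing) (T : MulSub R) (p : R * R) : R * R -> Prop :=
  fun q => msub T (snd q) /\
    exists x, msub T x /\
      hmul x (hmul (fst p) (snd q)) = hmul x (hmul (fst q) (snd p)).

(* T^{-1} R as the type of equivalence classes *)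
Definition loc (R : HyperRing) (T : MulSub R) : Type :=
  { C : R * R -> Prop | exists p, msub T (snd p) /\ C = cls T p }.

(* (a,t) is a representative of the class c, i.e. c = a/t *)
Definition in_class (R : HyperRing) (T : MulSub R) (c : loc T) (p : R * R) : Prop :=
  proj1_sig c p.

Definition mkfrac (R : HyperRing) (T : MulSub R) (p : R * R) (H : msub T (snd p))
  : loc T := exist _ (cls T p) (ex_intro _ p (conj H eq_refl)).

Definition rep (R : HyperRing) (T : MulSub R) (c : loc T) : { p : R * R |
    msub T (snd p) /\ proj1_sig c = cls T p } :=
  constructive_indefinite_description _ (proj2_sig c).

Definition loc_add (R : HyperRing) (T : MulSub R) (c1 c2 c : loc T) : Prop :=
  exists p1 p2 y, in_class c1 p1 /\ in_class c2 p2 /\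
    hadd (hmul (fst p1) (snd p2)) (hmul (snd p1) (fst p2)) y /\
    in_class c (y, hmul (snd p1) (snd p2)).

Definition loc_mul (R : HyperRing) (T : MulSub R) (c1 c2 : loc T) : loc T :=
  let (p1, H1) := rep c1 in
  let (p2, H2) := rep c2 in
  @mkfrac R T (hmul (fst p1) (fst p2), hmul (snd p1) (snd p2))
      (msubM (proj1 H1) (proj1 H2)).

Definition K (R : HyperRing) := loc (Ssub R).
Definition Rf (R : HyperRing) (f : R) := loc (Powsub f).

Definition Fsec (R : HyperRing) (U : Spec R -> Prop) (u : K R) : Prop :=
  forall p : Spec R, U p ->
    exists a b, nzd b /\ ~ proj1_sig p b /\ in_class u (a, b).

Definition strict_hom (A B : Type) (addA : A -> A -> A -> Prop) (mulA : A -> A -> A)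
  (addB : B -> B -> B -> Prop) (mulB : B -> B -> B) (phi : A -> B) : Prop :=
  (forall x y w, (exists z, addA x y z /\ w = phi z) <-> addB (phi x) (phi y) w) /\
  (forall x y, phi (mulA x y) = mulB (phi x) (phi y)).

Definition injective (A B : Type) (phi : A -> B) : Prop :=
  forall x y, phi x = phi y -> x = y.

(* Main.v *)
Require Import Defs.
From Stdlib Require Import Classical ClassicalEpsilon FunctionalExtensionality PropExtensionality ProofIrrelevance List Arith.
Import ListNotations.
Set Implicit Arguments.
Unset Strict Implicit.

Inductive mexp := MVar (n : nat) | MOne | MMul (a b : mexp).

Fixpoint meval (R : HyperRing) (env : list R) (e : mexp) : R :=
  match e with
  | MVar n => nth n env hone
  | MOne => hone
  | MMul a b => hmul (meval env a) (meval env b)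
  end.

Fixpoint mflat (e : mexp) : list nat :=
  match e with MVar n => [n] | MOne => [] | MMul a b => mflat a ++ mflat b end.

Definition evl (R : HyperRing) (env : list R) (l : list nat) : R :=
  fold_right (fun n acc => hmul (nth n env hone) acc) hone l.

Fixpoint ins (n : nat) (l : list nat) : list nat :=
  match l with [] => [n] | m :: l' => if Nat.leb n m then n :: l else m :: ins n l' end.
Fixpoint srt (l : list nat) : list nat :=
  match l with [] => [] | n :: l' => ins n (srt l') end.

Lemma mul1r (R : HyperRing) (x : R) : hmul x hone = x.
Proof. rewrite hmul_comm. apply hmul_1l. Qed.

Lemma mulCA (R : HyperRing) (x y z : R) : hmul x (hmul y z) = hmul y (hmul x z).
Proof. rewrite !hmul_assoc, (hmul_comm x y). reflexivity. Qed.

Lemma evl_app (R : HyperRing) env l1 l2 :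
  @evl R env (l1 ++ l2) = hmul (evl env l1) (evl env l2).
Proof.
  induction l1 as [|n l IH]; simpl. now rewrite hmul_1l.
  rewrite IH. apply hmul_assoc.
Qed.

Lemma evl_flat (R : HyperRing) env e : @meval R env e = evl env (mflat e).
Proof.
  induction e; simpl. now rewrite mul1r. reflexivity.
  now rewrite evl_app, IHe1, IHe2.
Qed.

Lemma evl_ins (R : HyperRing) env n l :
  @evl R env (ins n l) = hmul (nth n env hone) (evl env l).
Proof.
  induction l as [|m l IH]; simpl. reflexivity.
  destruct (Nat.leb n m); simpl. reflexivity.
  rewrite IH. apply mulCA.
Qed.

Lemma evl_srt (R : HyperRing) env l : @evl R env (srt l) = evl env l.
Proof.
  induction l as [|n l IH]; simpl. reflexivity.
  now rewrite evl_ins, IH.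
Qed.

Lemma mac_correct (R : HyperRing) env e1 e2 :
  srt (mflat e1) = srt (mflat e2) -> @meval R env e1 = meval env e2.
Proof.
  intro H. rewrite !evl_flat, <- (evl_srt env (mflat e1)), <- (evl_srt env (mflat e2)), H.
  reflexivity.
Qed.

Ltac inlist x l :=
  match l with
  | context [x] => constr:(true)
  | _ => constr:(false)
  end.

Ltac collect t l :=
  match t with
  | @hmul _ ?a ?b => let l1 := collect a l in collect b l1
  | @hone _ => l
  | _ => lazymatch l with
         | context [cons t _] => l
         | _ => constr:(cons t l)
         end
  end.

Ltac lookup x l :=
  lazymatch l with
  | cons x _ => constr:(O)
  | cons _ ?l' => let n := lookup x l' in constr:(S n)
  end.

Ltac reify t l :=
  match t with
  | @hmul _ ?a ?b => let ea := reify a l in let eb := reify b l in constr:(MMul ea eb)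
  | @hone _ => constr:(MOne)
  | _ => let n := lookup t l in constr:(MVar n)
  end.

Ltac acm := cbn [fst snd];
  match goal with
  | |- @eq (hr ?R) ?x ?y =>
    let l0 := constr:(@nil (hr R)) in
    let l1 := collect x l0 in
    let l := collect y l1 in
    let ex := reify x l in
    let ey := reify y l in
    change (@meval R l ex = @meval R l ey);
    apply mac_correct; vm_compute; reflexivity
  end.

Goal forall (R : HyperRing) (a b c d : R), hmul (hmul a b) (hmul c (hmul hone d)) = hmul d (hmul (hmul c a) b).
Proof. intros. acm. Qed.

Lemma hadd_0r (R : HyperRing) (x z : R) : hadd x hzero z <-> z = x.
Proof. rewrite hadd_comm. apply hadd_0l. Qed.

Lemma hnegK (R : HyperRing) (x : R) : hneg (hneg x) = x.
Proof. symmetry. apply hneg_unique. apply hadd_comm. apply hadd_neg. Qed.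

Lemma sub0_eq (R : HyperRing) (u v : R) : hadd u (hneg v) hzero -> u = v.
Proof. intro H. apply hadd_rev in H. now apply hadd_0r in H. Qed.

Lemma hmul_0r (R : HyperRing) (x : R) : hmul x hzero = hzero.
Proof. rewrite hmul_comm. apply hmul_0l. Qed.

Lemma mulN (R : HyperRing) (x y : R) : hmul x (hneg y) = hneg (hmul x y).
Proof.
  apply hneg_unique. apply hmul_distr. exists hzero. split.
  apply hadd_neg. now rewrite hmul_0r.
Qed.

Lemma mulNl (R : HyperRing) (x y : R) : hmul (hneg x) y = hneg (hmul x y).
Proof. rewrite hmul_comm, mulN, hmul_comm. reflexivity. Qed.

Lemma nzd_cancel (R : HyperRing) (c u v : R) : nzd c -> hmul c u = hmul c v -> u = v.
Proof.
  intros Hc E.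
  assert (H : hadd (hmul c u) (hmul c (hneg v)) hzero).
  { rewrite mulN, E. apply hadd_neg. }
  apply hmul_distr in H. destruct H as [w [Hw E0]].
  symmetry in E0. apply Hc in E0. subst w. now apply sub0_eq.
Qed.

Lemma nzd_pow (R : HyperRing) (f : R) n : nzd f -> nzd (hpow f n).
Proof. intro Hf. induction n; simpl. apply nzd1. now apply nzdM. Qed.

Lemma ideal_0 (R : HyperRing) (I : R -> Prop) : hyperideal I -> I hzero.
Proof.
  intros [[a Ha] H]. apply (H a a hone). auto. auto. rewrite hmul_1l. apply hadd_neg.
Qed.

Lemma ideal_neg (R : HyperRing) (I : R -> Prop) b : hyperideal I -> I b -> I (hneg b).
Proof.
  intros HI Hb. apply (proj2 HI hzero b hone). now apply ideal_0. auto.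
  rewrite hmul_1l. now apply hadd_0l.
Qed.

Lemma ideal_mul (R : HyperRing) (I : R -> Prop) r b : hyperideal I -> I b -> I (hmul r b).
Proof.
  intros HI Hb. apply (proj2 HI hzero b (hneg r)). now apply ideal_0. auto.
  rewrite mulNl, hnegK. now apply hadd_0l.
Qed.

Lemma ideal_add (R : HyperRing) (I : R -> Prop) a b z :
  hyperideal I -> I a -> I b -> hadd a b z -> I z.
Proof.
  intros HI Ha Hb Hz. apply (proj2 HI a (hneg b) hone). auto. now apply ideal_neg.
  now rewrite hmul_1l, hnegK.
Qed.

Lemma ideal_one (R : HyperRing) (I : R -> Prop) : hyperideal I -> I hone -> forall x, I x.
Proof. intros HI H1 x. rewrite <- (mul1r x). now apply ideal_mul. Qed.

Lemma prime_not1 (R : HyperRing) (P : R -> Prop) : prime_hyperideal P -> ~ P hone.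
Proof.
  intros [HI [[x Hx] _]] H1. apply Hx. now apply ideal_one.
Qed.

Lemma prime_pow (R : HyperRing) (P : R -> Prop) f n :
  prime_hyperideal P -> ~ P f -> ~ P (hpow f n).
Proof.
  intros HP Hf. induction n; simpl. now apply prime_not1.
  intro H. destruct (proj2 (proj2 HP) _ _ H); auto.
Qed.

Lemma maximal_prime (R : HyperRing) (M : R -> Prop) :
  maximal_hyperideal M -> prime_hyperideal M.
Proof.
  intros [HI [Hx Hmax]]. split; [exact HI|split; [exact Hx|]].
  intros a b Hab. destruct (classic (M a)) as [Ha|Ha]; [now left|right].
  set (J := fun r => M (hmul r b)).
  assert (HJ : hyperideal J).
  { split. exists hzero. unfold J. rewrite hmul_0l. now apply ideal_0.
    intros a' b' r z Ha' Hb' Hz. unfold J in *.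
    assert (H : hadd (hmul b a') (hmul b (hneg (hmul r b'))) (hmul b z)).
    { apply hmul_distr. eauto. }
    rewrite mulN in H. rewrite (hmul_comm b a'), (hmul_comm b z) in H.
    replace (hmul b (hmul r b')) with (hmul r (hmul b' b)) in H by acm.
    exact (proj2 HI _ _ _ _ Ha' Hb' H). }
  destruct (Hmax J HJ) as [E|E].
  - intros x Hm. unfold J. rewrite hmul_comm. now apply ideal_mul.
  - exfalso. apply Ha. apply E. exact Hab.
  - specialize (E hone). unfold J in E. now rewrite hmul_1l in E.
Qed.

From mathcomp Require classical_sets.

Lemma exists_max (R : HyperRing) (I : R -> Prop) :
  hyperideal I -> ~ I hone -> exists M, maximal_hyperideal M /\ forall x, I x -> M x.
Proof.
  intros HI H1.
  set (P := fun X : R -> Prop =>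
        (hyperideal X /\ ~ X hone /\ (forall x, I x -> X x)) \/ (forall x, ~ X x)).
  destruct (@classical_sets.Zorn_bigcup R P) as [A [PA Amax]].
  - intros F FP Ftot.
    unfold classical_sets.bigcup, classical_sets.mkset.
    destruct (classic (exists X y, F X /\ X y)) as [[X0 [y0 [FX0 Xy0]]]|Hn].
    + left.
      assert (HX : forall X y, F X -> X y -> hyperideal X /\ ~ X hone /\ (forall x, I x -> X x)).
      { intros X y FX Xy. destruct (FP X FX) as [H|H]. exact H. now destruct (H y). }
      repeat split.
      * exists y0. exists X0; auto.
      * intros a b r z [X FX Xa] [Y FY Yb] Hz.
        destruct (Ftot X Y FX FY) as [S|S].
        -- exists Y; auto. apply (proj2 (proj1 (HX Y b FY Yb)) a b r); auto.
        -- exists X; auto. apply (proj2 (proj1 (HX X a FX Xa)) a b r); auto.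
      * intros [X FX X1]. apply (HX X hone FX X1). exact X1.
      * intros x Ix. exists X0; auto. apply (HX X0 y0 FX0 Xy0). exact Ix.
    + right. intros x [X FX Xx]. apply Hn. eauto.
  - assert (PA' : hyperideal A /\ ~ A hone /\ (forall x, I x -> A x)).
    { destruct PA as [H|H]. exact H. exfalso. apply (Amax I).
      split. intros x Ax. now destruct (H x).
      intro S. destruct HI as [[a Ha] _]. exact (H a (S a Ha)).
      left. auto. }
    destruct PA' as [HA [HA1 HAI]].
    exists A. split; [|exact HAI].
    split; [exact HA|split; [eauto|]].
    intros J HJ AJ. destruct (classic (J hone)) as [J1|J1].
    + right. now apply ideal_one.
    + left. destruct (classic (forall x, J x -> A x)) as [S|S].
      * intro x; split; auto.
      * exfalso. apply (Amax J). split. exact AJ. exact S.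
        left. split; auto.
Qed.

Lemma cls_refl (R : HyperRing) (T : MulSub R) p : msub T (snd p) -> cls T p p.
Proof. intro H. split; auto. exists hone. split. apply msub1. reflexivity. Qed.

Lemma cls_sym (R : HyperRing) (T : MulSub R) p q :
  msub T (snd p) -> cls T p q -> cls T q p.
Proof. intros Hp [Hq [x [Hx E]]]. split; auto. exists x. split; auto. Qed.

Lemma cls_trans (R : HyperRing) (T : MulSub R) p q r :
  cls T p q -> cls T q r -> cls T p r.
Proof.
  destruct p as [p1 p2], q as [q1 q2], r as [r1 r2]; simpl.
  intros [Hq [x [Hx E1]]] [Hr [y [Hy E2]]]; simpl in *. split; auto.
  exists (hmul x (hmul y q2)). split. apply msubM; auto. apply msubM; auto.
  transitivity (hmul (hmul y r2) (hmul x (hmul p1 q2))). acm.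
  rewrite E1.
  transitivity (hmul (hmul x p2) (hmul y (hmul q1 r2))). acm.
  rewrite E2. acm.
Qed.

Lemma cls_eq (R : HyperRing) (T : MulSub R) p q :
  msub T (snd p) -> cls T p q -> cls T p = cls T q.
Proof.
  intros Hp H. apply functional_extensionality. intro r.
  apply propositional_extensionality. split; intro Hr.
  - eapply cls_trans. apply cls_sym; eauto. exact Hr.
  - eapply cls_trans; eauto.
Qed.

Lemma in_class_msub (R : HyperRing) (T : MulSub R) (c : loc T) q :
  in_class c q -> msub T (snd q).
Proof.
  destruct c as [C [p [Hp E]]]. unfold in_class; simpl. subst C. now intros [H _].
Qed.

Lemma in_class_cls (R : HyperRing) (T : MulSub R) (c : loc T) p q :
  in_class c p -> in_class c q -> cls T p q.
Proof.
  destruct c as [C [p0 [Hp0 E]]]. unfold in_class; simpl. subst C.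
  intros H1 H2. eapply cls_trans. apply cls_sym; eauto. exact H2.
Qed.

Lemma in_class_trans (R : HyperRing) (T : MulSub R) (c : loc T) p q :
  in_class c p -> cls T p q -> in_class c q.
Proof.
  destruct c as [C [p0 [Hp0 E]]]. unfold in_class; simpl. subst C.
  intros H1 H2. eapply cls_trans; eauto.
Qed.

Lemma loc_ext (R : HyperRing) (T : MulSub R) (c d : loc T) q :
  in_class c q -> in_class d q -> c = d.
Proof.
  destruct c as [C HC], d as [D HD]. unfold in_class; simpl.
  intros H1 H2.
  assert (E : C = D).
  { destruct HC as [p0 [Hp0 E0]], HD as [p1 [Hp1 E1]]. subst C D.
    rewrite (cls_eq Hp0 H1). symmetry. apply cls_eq; auto. }
  subst D. f_equal. apply proof_irrelevance.
Qed.

Lemma in_class_mkfrac (R : HyperRing) (T : MulSub R) p (H : msub T (snd p)) :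
  in_class (mkfrac H) p.
Proof. now apply cls_refl. Qed.

Lemma in_class_rep (R : HyperRing) (T : MulSub R) (c : loc T) :
  in_class c (proj1_sig (rep c)).
Proof.
  destruct (rep c) as [p [Hp E]]; simpl. unfold in_class. rewrite E. now apply cls_refl.
Qed.

Lemma loc_mul_spec (R : HyperRing) (T : MulSub R) (c1 c2 : loc T) p1 p2 :
  in_class c1 p1 -> in_class c2 p2 ->
  in_class (loc_mul c1 c2) (hmul (fst p1) (fst p2), hmul (snd p1) (snd p2)).
Proof.
  intros H1 H2. unfold loc_mul.
  pose proof (in_class_rep c1) as R1. pose proof (in_class_rep c2) as R2.
  destruct (rep c1) as [r1 [Hr1 E1]], (rep c2) as [r2 [Hr2 E2]]; simpl in *.
  pose proof (in_class_cls R1 H1) as C1. pose proof (in_class_cls R2 H2) as C2.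
  unfold in_class, mkfrac; simpl.
  destruct r1 as [a1 t1], r2 as [a2 t2], p1 as [b1 u1], p2 as [b2 u2]; simpl in *.
  destruct C1 as [Hu1 [x [Hx X1]]], C2 as [Hu2 [y [Hy X2]]]; simpl in *.
  split; simpl. apply msubM; auto.
  exists (hmul x y). split. apply msubM; auto.
  transitivity (hmul (hmul x (hmul a1 u1)) (hmul y (hmul a2 u2))). acm.
  rewrite X1, X2. acm.
Qed.

Lemma cls_mono (R : HyperRing) (T1 T2 : MulSub R) p q :
  (forall x, msub T1 x -> msub T2 x) -> cls T1 p q -> cls T2 p q.
Proof. intros S [H [x [Hx E]]]. split; auto. exists x; auto. Qed.

Lemma pow_nzd (R : HyperRing) (f t : R) : nzd f -> msub (Powsub f) t -> nzd t.
Proof. intros Hf [n ->]. now apply nzd_pow. Qed.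

Definition phi (R : HyperRing) (f : R) (Hf : nzd f) (c : Rf f) : K R :=
  @mkfrac R (Ssub R) (proj1_sig (rep c))
     (pow_nzd Hf (proj1 (proj2_sig (rep c)))).

Lemma in_class_phi (R : HyperRing) (f : R) (Hf : nzd f) (c : Rf f) q :
  in_class c q -> in_class (phi Hf c) q.
Proof.
  intro H. unfold phi. unfold in_class, mkfrac; simpl.
  apply (cls_mono (T1 := Powsub f)). intros x Hx. exact (pow_nzd Hf Hx).
  exact (in_class_cls (in_class_rep c) H).
Qed.

Lemma part1 (R : HyperRing) (f : R) : nzd f ->
     exists phi : Rf f -> K R,
       (forall (a : R) (n : nat) (x : Rf f),
           in_class x (a, hpow f n) -> in_class (phi x) (a, hpow f n)) /\
       injective phi /\
       strict_hom (@loc_add R (Powsub f)) (@loc_mul R (Powsub f))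
                  (@loc_add R (Ssub R)) (@loc_mul R (Ssub R)) phi /\
       (forall x, Fsec (Dopen f) (phi x)).
Proof.
  intro Hf. exists (phi Hf). split; [|split; [|split]].
  - intros a n x H. now apply in_class_phi.
  - intros x y E.
    generalize (in_class_rep x), (in_class_rep y).
    generalize (proj1_sig (rep x)), (proj1_sig (rep y)). intros [a1 t1] [a2 t2] Rx Ry.
    assert (Hy : in_class (phi Hf y) (a2, t2)) by now apply in_class_phi.
    rewrite <- E in Hy.
    assert (Hx : in_class (phi Hf x) (a1, t1)) by now apply in_class_phi.
    destruct (in_class_cls Hx Hy) as [_ [c [Hc Ec]]]. simpl in Ec.
    apply (nzd_cancel Hc) in Ec.
    apply (loc_ext (q := (a2, t2))); auto.
    apply (in_class_trans Rx). split. exact (in_class_msub Ry). exists hone. split. apply msub1.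
    simpl. now rewrite !hmul_1l, Ec.
  - split.
    + intros x y w. split.
      * intros [z [[p1 [p2 [y0 [H1 [H2 [H3 H4]]]]]] ->]].
        exists p1, p2, y0. split; [|split; [|split]]; auto; now apply in_class_phi.
      * intros [[a1 t1] [[a2 t2] [y0 [H1 [H2 [H3 H4]]]]]]. simpl in *.
        generalize (in_class_rep x), (in_class_rep y).
        generalize (proj1_sig (rep x)), (proj1_sig (rep y)). intros [b1 u1] [b2 u2] Rx Ry.
        pose proof (in_class_msub Rx) as Hu1. pose proof (in_class_msub Ry) as Hu2.
        simpl in *.
        pose proof (in_class_cls (in_class_phi Hf Rx) H1) as [Ht1 [c1 [Hc1 E1]]].
        pose proof (in_class_cls (in_class_phi Hf Ry) H2) as [Ht2 [c2 [Hc2 E2]]].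
        simpl in *.
        apply (nzd_cancel Hc1) in E1. apply (nzd_cancel Hc2) in E2.
        assert (H5 : hadd (hmul (hmul u1 u2) (hmul a1 t2)) (hmul (hmul u1 u2) (hmul t1 a2))
                          (hmul (hmul u1 u2) y0)).
        { apply hmul_distr. eauto. }
        replace (hmul (hmul u1 u2) (hmul a1 t2)) with (hmul (hmul t1 t2) (hmul b1 u2)) in H5
          by (transitivity (hmul (hmul t2 u2) (hmul b1 t1)); [acm|]; rewrite E1; acm).
        replace (hmul (hmul u1 u2) (hmul t1 a2)) with (hmul (hmul t1 t2) (hmul u1 b2)) in H5
          by (transitivity (hmul (hmul t1 u1) (hmul b2 t2)); [acm|]; rewrite E2; acm).
        apply hmul_distr in H5. destruct H5 as [y' [Hy' Ey']].
        assert (Hu : msub (Powsub f) (snd (y', hmul u1 u2))) by (apply msubM; auto).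
        exists (mkfrac Hu). split.
        -- exists (b1, u1), (b2, u2), y'. split; [|split; [|split]]; auto. apply in_class_mkfrac.
        -- symmetry. apply (loc_ext (q := (y0, hmul t1 t2))); auto.
           apply (in_class_trans (in_class_phi Hf (in_class_mkfrac Hu))).
           split; simpl. apply (in_class_msub H4). exists hone. split. apply nzd1.
           transitivity (hmul (hmul t1 t2) y'). acm. rewrite <- Ey'. acm.
    + intros x y.
      apply (loc_ext (q := (hmul (fst (proj1_sig (rep x))) (fst (proj1_sig (rep y))),
                             hmul (snd (proj1_sig (rep x))) (snd (proj1_sig (rep y)))))).
      * apply in_class_phi. apply loc_mul_spec; apply in_class_rep.
      * apply loc_mul_spec; apply in_class_phi; apply in_class_rep.
  - intros x p Hp. unfold Dopen in Hp.
    generalize (in_class_rep x). generalize (proj1_sig (rep x)). intros [a t] Rx.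
    destruct (in_class_msub Rx) as [n Hn]. simpl in *. subst t.
    exists a, (hpow f n). split. now apply nzd_pow. split.
    apply prime_pow; auto. exact (proj2_sig p).
    now apply in_class_phi.
Qed.

Definition iota (R : HyperRing) (a : R) : K R := @mkfrac R (Ssub R) (a, hone) (@nzd1 R).

Lemma iota_in (R : HyperRing) (a : R) : in_class (iota a) (a, hone).
Proof. apply in_class_mkfrac. Qed.

Lemma iota_surj (R : HyperRing) (u : K R) : Fsec (fun _ => True) u -> exists a, iota a = u.
Proof.
  intro Hu.
  generalize (in_class_rep u). generalize (proj1_sig (rep u)). intros [c0 t0] Ru.
  pose proof (in_class_msub Ru) as Ht0. simpl in Ht0.
  set (D := fun r => exists a, hmul r c0 = hmul a t0).
  assert (HD : hyperideal D).
  { split. exists hzero. exists hzero. now rewrite !hmul_0l.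
    intros a' b' r z [e1 E1] [e2 E2] Hz.
    assert (H : hadd (hmul c0 a') (hmul c0 (hneg (hmul r b'))) (hmul c0 z)).
    { apply hmul_distr. eauto. }
    replace (hmul c0 (hneg (hmul r b'))) with (hmul t0 (hneg (hmul r e2))) in H.
    2:{ rewrite !mulN. f_equal. transitivity (hmul r (hmul e2 t0)). acm.
        rewrite <- E2. acm. }
    replace (hmul c0 a') with (hmul t0 e1) in H by (rewrite hmul_comm, <- E1; acm).
    apply hmul_distr in H. destruct H as [e [He Ee]].
    exists e. rewrite hmul_comm, Ee. acm. }
  destruct (classic (D hone)) as [[a Ea]|N1].
  - exists a. apply (loc_ext (q := (c0, t0))); auto.
    apply (in_class_trans (iota_in a)). split. exact Ht0. exists hone. split. apply nzd1.
    simpl. rewrite hmul_1l in Ea. rewrite Ea. acm.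
  - exfalso. destruct (exists_max HD N1) as [M [HM DM]].
    pose (p := exist (@prime_hyperideal R) M (maximal_prime HM) : Spec R).
    destruct (Hu p I) as [a [b [Hb [Hbp Hab]]]]. simpl in Hbp.
    destruct (in_class_cls Ru Hab) as [_ [x [Hx Ex]]]. simpl in Ex.
    apply (nzd_cancel Hx) in Ex.
    apply Hbp, DM. exists a. rewrite hmul_comm, Ex. acm.
Qed.

Lemma part2 (R : HyperRing) :
  exists iota : R -> K R,
     (forall a : R, in_class (iota a) (a, hone)) /\
     injective iota /\
     strict_hom (@hadd R) (@hmul R) (@loc_add R (Ssub R)) (@loc_mul R (Ssub R)) iota /\
     (forall a, Fsec (fun _ => True) (iota a)) /\
     (unique_maximal R ->
        forall u : K R, Fsec (fun _ => True) u -> exists a, iota a = u).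
Proof.
  exists (@iota R). split; [|split; [|split; [|split]]].
  - apply iota_in.
  - intros a b E. pose proof (iota_in b) as Hb. rewrite <- E in Hb.
    destruct (in_class_cls (iota_in a) Hb) as [_ [c [Hc Ec]]]. simpl in Ec.
    apply (nzd_cancel Hc) in Ec. now rewrite !mul1r in Ec.
  - split.
    + intros x y w. split.
      * intros [z [Hz ->]]. exists (x, hone), (y, hone), z.
        split; [|split; [|split]]; try apply iota_in.
        simpl. now rewrite mul1r, hmul_1l.
        simpl. rewrite hmul_1l. apply iota_in.
      * intros [[a1 t1] [[a2 t2] [y0 [H1 [H2 [H3 H4]]]]]]. simpl in *.
        destruct (in_class_cls (iota_in x) H1) as [Ht1 [c1 [Hc1 E1]]].
        destruct (in_class_cls (iota_in y) H2) as [Ht2 [c2 [Hc2 E2]]].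
        simpl in *.
        apply (nzd_cancel Hc1) in E1. apply (nzd_cancel Hc2) in E2.
        rewrite mul1r in E1, E2.
        replace (hmul a1 t2) with (hmul (hmul t1 t2) x) in H3 by (rewrite <- E1; acm).
        replace (hmul t1 a2) with (hmul (hmul t1 t2) y) in H3 by (rewrite <- E2; acm).
        apply hmul_distr in H3. destruct H3 as [z [Hz Ez]].
        exists z. split; auto.
        symmetry. apply (loc_ext (q := (y0, hmul t1 t2))); auto.
        apply (in_class_trans (iota_in z)). split. apply (in_class_msub H4).
        exists hone. split. apply nzd1. simpl. rewrite Ez. acm.
    + intros x y. apply (loc_ext (q := (hmul x y, hmul hone hone))).
      * rewrite hmul_1l. apply iota_in.
      * apply (loc_mul_spec (p1 := (x, hone)) (p2 := (y, hone))); apply iota_in.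
  - intros a p _. exists a, hone. split. apply nzd1. split.
    apply prime_not1. exact (proj2_sig p). apply iota_in.
  - intros _. apply iota_surj.
Qed.

Theorem proposition4p29 (R : HyperRing) :
  Spec_irreducible R ->
  (forall f : R, nzd f ->
     exists phi : Rf f -> K R,
       (forall (a : R) (n : nat) (x : Rf f),
           in_class x (a, hpow f n) -> in_class (phi x) (a, hpow f n)) /\
       injective phi /\
       strict_hom (@loc_add R (Powsub f)) (@loc_mul R (Powsub f))
                  (@loc_add R (Ssub R)) (@loc_mul R (Ssub R)) phi /\
       (forall x, Fsec (Dopen f) (phi x))) /\
  (exists iota : R -> K R,
     (forall a : R, in_class (iota a) (a, hone)) /\
     injective iota /\
     strict_hom (@hadd R) (@hmul R) (@loc_add R (Ssub R)) (@loc_mul R (Ssub R)) iota /\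
     (forall a, Fsec (fun _ => True) (iota a)) /\
     (unique_maximal R ->
        forall u : K R, Fsec (fun _ => True) u -> exists a, iota a = u)).
Proof.
  intros _. split. intros f Hf. now apply part1. apply part2.
Qed.
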